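(* Let $k\ge2$. For all $f:\Xi_k\to\mathbb R$, $\mathcal S_k\widehat{\mathcal L}_k(f\circ\Phi_k)=(L_kf)\circ\Phi_k$.
   Context: $V$ is a finite set with symmetric non-negative weights $c_{xy}=c_{yx}\ge0$, $\alpha=(\alpha_x)$ positive. $\Xi_k:=\{\eta\in\mathbb N_0^V:\sum_x\eta_x=k\}$, $\Phi_k(\mathbf x)=\sum_{i=1}^k\delta_{x_i}$ for $\mathbf x\in V^k$. $\mathcal S_k\varphi(\mathbf x)=\frac1{k!}\sum_{\sigma\in S_k}\varphi(x_{\sigma(1)},\dots,x_{\sigma(k)})$. $\widehat{\mathcal L}_k\varphi(\mathbf x)=\sum_{x,y}c_{xy}\sum_{i=1}^k\delta_{x,x_i}(\alpha_y+2\sum_{j=1}^{i-1}\delta_{y,x_j})(\varphi(\mathbf x_i^y)-\varphi(\mathbf x))$, with $\mathbf x_i^y$ being $\mathbf x$ with $i$-th coordinate replaced by $y$. $L_kf(\eta)=\sum_x\eta_x\sum_yc_{xy}(\alpha_y+\eta_y)(f(\eta-\delta_x+\delta_y)-f(\eta))$, where $\eta-\delta_x+\delta_y$ moves one particle from $x$ to $y$. *)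

(* Defs.v *)
From mathcomp Require Import all_boot all_order all_fingroup all_algebra.
From mathcomp Require Import reals.
Set Implicit Arguments. Unset Strict Implicit. Unset Printing Implicit Defensive.
Import Order.TTheory GRing.Theory Num.Theory.

Section Defs.
Variable V : finType.

Definition Xi (k : nat) := {eta : {ffun V -> nat} | \sum_(z : V) eta z == k}.

Definition Phi_fun (k : nat) (x : {ffun 'I_k -> V}) : {ffun V -> nat} :=
  [ffun z => \sum_(i < k) (x i == z : nat)].

Lemma Phi_fun_sum (k : nat) (x : {ffun 'I_k -> V}) :
  \sum_(z : V) Phi_fun x z == k.
Proof.
apply/eqP.
rewrite /Phi_fun.
under eq_bigr do rewrite ffunE.
rewrite exchange_big /=.
rewrite (eq_bigr (fun _ => 1)); last first.
  move=> i _; rewrite (bigD1 (x i)) //= eqxx big1 ?addn0 //.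
  by move=> z /negbTE; rewrite eq_sym => ->.
by rewrite sum1_card card_ord.
Qed.

Definition Phi (k : nat) (x : {ffun 'I_k -> V}) : Xi k :=
  exist _ (Phi_fun x) (Phi_fun_sum x).

(* eta - delta_x + delta_y (moving one particle from x to y); only used
   when eta_x > 0, otherwise (irrelevant, multiplied by eta_x = 0) eta itself *)
Definition move_fun (eta : {ffun V -> nat}) (x y : V) : {ffun V -> nat} :=
  if 0 < eta x then [ffun z => eta z - (z == x) + (z == y)] else eta.

Lemma move_fun_sum (k : nat) (eta : Xi k) (x y : V) :
  \sum_(z : V) move_fun (val eta) x y z == k.
Proof.
case: eta => e /= /eqP He; rewrite /move_fun.
case: ifP => [hx|_]; last by rewrite He.
under eq_bigr do rewrite ffunE.
rewrite big_split /= -He.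
have -> : \sum_(z : V) (z == y : nat) = 1.
  rewrite (bigD1 y) //= eqxx big1 ?addn0 //.
  by move=> z hz; rewrite (negbTE hz).
apply/eqP; rewrite [X in _ = X](bigD1 x) //= [X in X + _ = _](bigD1 x) //= eqxx.
rewrite (eq_bigr (fun z => e z)); last by move=> z hz; rewrite (negbTE hz) subn0.
by rewrite addnAC subn1 addn1 prednK.
Qed.

Definition move (k : nat) (eta : Xi k) (x y : V) : Xi k :=
  exist _ (move_fun (val eta) x y) (move_fun_sum eta x y).

Variable R : realType.
Local Open Scope ring_scope.

Definition Lk (k : nat) (c : V -> V -> R) (alpha : V -> R)
    (f : Xi k -> R) (eta : Xi k) : R :=
  \sum_(x : V) ((val eta x)%:R *
     \sum_(y : V) c x y * (alpha y + (val eta y)%:R) *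
        (f (move eta x y) - f eta)).

Definition repl (k : nat) (x : {ffun 'I_k -> V}) (i : 'I_k) (y : V)
  : {ffun 'I_k -> V} := [ffun j => if j == i then y else x j].

Definition hatLk (k : nat) (c : V -> V -> R) (alpha : V -> R)
    (phi : {ffun 'I_k -> V} -> R) (x : {ffun 'I_k -> V}) : R :=
  \sum_(a : V) \sum_(b : V) c a b *
    \sum_(i < k) ((a == x i)%:R *
      (alpha b + 2 * \sum_(j < k | (j < i)%N) (b == x j)%:R) *
      (phi (repl x i b) - phi x)).

Definition Sk (k : nat) (phi : {ffun 'I_k -> V} -> R) (x : {ffun 'I_k -> V}) : R :=
  (k`!%:R)^-1 * \sum_(s : 'S_k) phi [ffun i => x (s i)].

End Defs.

(* Main.v *)
Require Import Defs.
From mathcomp Require Import all_boot all_order all_fingroup all_algebra.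
From mathcomp Require Import reals ring.
Import Order.TTheory GRing.Theory Num.Theory.
Set Implicit Arguments. Unset Strict Implicit.
Local Open Scope ring_scope.

Lemma Phi_perm (V : finType) k (x : {ffun 'I_k -> V}) (s : 'S_k) :
  Phi [ffun i => x (s i)] = Phi x.
Proof.
apply: val_inj => /=; apply/ffunP => z; rewrite !ffunE.
rewrite [RHS](reindex_inj (@perm_inj _ s)) /=.
by apply: eq_bigr => i _; rewrite ffunE.
Qed.

Lemma Phi_repl (V : finType) k (x : {ffun 'I_k -> V}) i b :
  Phi (repl x i b) = move (Phi x) (x i) b.
Proof.
apply: val_inj => /=; rewrite /move_fun /=.
rewrite [X in (0 < X)%N]ffunE (bigD1 i) //= eqxx /=.
apply/ffunP => z; rewrite !ffunE (bigD1 i) //= (bigD1 i (P := predT)) //=.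
rewrite ffunE eqxx.
rewrite (eq_bigr (fun j => (x j == z : nat))); last first.
  by move=> j hj; rewrite ffunE (negbTE hj).
by rewrite (eq_sym z (x i)) addKn (eq_sym z b) addnC.
Qed.

Lemma move_same (V : finType) k (eta : Xi V k) a : move eta a a = eta.
Proof.
apply: val_inj => /=; rewrite /move_fun; case: ifP => h //.
apply/ffunP => z; rewrite ffunE; case: eqP => [->|_].
  by rewrite subnK.
by rewrite subn0 addn0.
Qed.

Lemma sum_ind (V : finType) (R : realType) (H : V -> R) (a0 : V) :
  \sum_(a : V) (a == a0)%:R * H a = H a0.
Proof.
rewrite (bigD1 a0) //= eqxx mul1r big1 ?addr0 //.
by move=> a /negbTE ->; rewrite mul0r.
Qed.

Lemma sum_ind' (V : finType) (R : realType) (H : V -> R) (a0 : V) :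
  \sum_(a : V) (a0 == a)%:R * H a = H a0.
Proof.
by rewrite -[RHS](sum_ind H); apply: eq_bigr => a _; rewrite eq_sym.
Qed.

Lemma sumPhi (V : finType) (R : realType) k (x : {ffun 'I_k -> V}) (H : V -> R) :
  \sum_(a : V) (val (Phi x) a)%:R * H a = \sum_(p < k) H (x p).
Proof.
rewrite /=; under eq_bigr do rewrite ffunE natr_sum mulr_suml.
rewrite exchange_big /=; apply: eq_bigr => p _.
exact: sum_ind'.
Qed.

Lemma hat_expand (V : finType) (R : realType) (c : V -> V -> R) alpha k
   (phi : {ffun 'I_k -> V} -> R) (y : {ffun 'I_k -> V}) :
  hatLk c alpha phi y =
  \sum_(i < k) \sum_(b : V) c (y i) b * alpha b * (phi (repl y i b) - phi y)
  + 2 * \sum_(i < k) \sum_(j < k | (j < i)%N)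
        c (y i) (y j) * (phi (repl y i (y j)) - phi y).
Proof.
rewrite /hatLk.
under eq_bigr do under eq_bigr do rewrite mulr_sumr.
rewrite exchange_big /=.
under eq_bigr do rewrite exchange_big.
rewrite exchange_big /=.
under eq_bigr => i _.
  under eq_bigr => b _.
    rewrite (eq_bigr (fun a => (a == y i)%:R *
        (c a b * ((alpha b + 2 * \sum_(j < k | (j < i)%N) (b == y j)%:R) *
        (phi (repl y i b) - phi y))))); last by move=> a _; ring.
    rewrite (sum_ind (fun a => c a b * ((alpha b + 2 * \sum_(j < k | (j < i)%N) (b == y j)%:R) *
        (phi (repl y i b) - phi y)))).
    rewrite mulrDl mulrDr.
    over.
  rewrite big_split /=.
  over.
rewrite big_split /=; congr (_ + _).
  by apply: eq_bigr => i _; apply: eq_bigr => b _; ring.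
rewrite mulr_sumr; apply: eq_bigr => i _.
rewrite mulr_sumr.
have E : forall b, c (y i) b * (2 * (\sum_(j < k | (j < i)%N) (b == y j)%:R) *
      (phi (repl y i b) - phi y)) = \sum_(j < k | (j < i)%N) (b == y j)%:R *
      (2 * (c (y i) b * (phi (repl y i b) - phi y))).
  by move=> b; rewrite -mulr_suml; ring.
rewrite (eq_bigr _ (fun b _ => E b)) exchange_big /=; apply: eq_bigr => j _.
exact: (sum_ind (fun b => 2 * (c (y i) b * (phi (repl y i b) - phi y)))).
Qed.

Theorem propositionA4 (V : finType) (R : realType)
  (c : V -> V -> R) (alpha : V -> R)
  (c_sym : forall x y, c x y = c y x)
  (c_ge0 : forall x y, 0 <= c x y)
  (alpha_gt0 : forall x, 0 < alpha x)
  (k : nat) (hk : (2 <= k)%N) (f : Xi V k -> R) :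
  forall x : {ffun 'I_k -> V},
    Sk (hatLk c alpha (fun z => f (Phi z))) x = Lk c alpha f (Phi x).
Proof.
move=> x.
set eta := Phi x.
pose F a b := f (move eta a b) - f eta.
pose G (p q : 'I_k) := c (x p) (x q) * F (x p) (x q).
pose A := \sum_(p < k) \sum_(b : V) c (x p) b * alpha b * F (x p) b.
have hs : forall s : 'S_k, hatLk c alpha (fun z => f (Phi z)) [ffun i => x (s i)]
   = A + 2 * \sum_(i < k) \sum_(j < k | (j < i)%N) G (s i) (s j).
  move=> s; rewrite hat_expand Phi_perm.
  congr (_ + 2 * _).
    rewrite /A [RHS](reindex_inj (@perm_inj _ s)) /=.
    apply: eq_bigr => i _; apply: eq_bigr => b _.
    by rewrite Phi_repl Phi_perm !ffunE.
  apply: eq_bigr => i _; apply: eq_bigr => j _.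
  by rewrite Phi_repl Phi_perm !ffunE.
pose T (i j : 'I_k) := \sum_(s : 'S_k) G (s i) (s j).
have hT : forall i j, T i j = T j i.
  move=> i j; rewrite /T (reindex_inj (mulgI (tperm i j))) /=.
  by apply: eq_bigr => s _; rewrite !permM tpermL tpermR.
have hT0 : forall i, T i i = 0.
  move=> i; rewrite /T big1 // => s _.
  by rewrite /G /F move_same subrr mulr0.
have two : forall X : R, 2 * X = X + X by move=> X; ring.
have key : 2 * \sum_(i < k) \sum_(j < k | (j < i)%N) T i j
     = \sum_(i < k) \sum_(j < k) T i j.
  rewrite two.
  under eq_bigr do rewrite big_mkcond /=.
  transitivity (\sum_(i < k) \sum_(j < k)
      ((if (j < i)%N then T i j else 0) + (if (i < j)%N then T i j else 0))).
    under [RHS]eq_bigr do rewrite big_split.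
    rewrite [RHS]big_split /=.
    congr (_ + _).
    rewrite exchange_big /=; apply: eq_bigr => i _; apply: eq_bigr => j _.
    by rewrite hT.
  apply: eq_bigr => i _; apply: eq_bigr => j _.
  case: (ltngtP i j) => h; rewrite ?addr0 ?add0r //.
  by move/val_inj: h => h; subst j; rewrite hT0.
have lhs : \sum_(s : 'S_k) hatLk c alpha (fun z => f (Phi z)) [ffun i => x (s i)]
     = (A + \sum_(p < k) \sum_(q < k) G p q) *+ k`!.
  under eq_bigr do rewrite hs.
  rewrite big_split sumr_const card_Sn mulrnDl; congr (_ + _).
  rewrite -mulr_sumr.
  transitivity (2 * \sum_(i < k) \sum_(j < k | (j < i)%N) T i j).
    congr (2 * _); rewrite /T exchange_big; apply: eq_bigr => i _.
    by rewrite exchange_big.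
  rewrite key /T.
  under eq_bigr do rewrite exchange_big.
  rewrite exchange_big -(card_Sn k) -sumr_const; apply: eq_bigr => s _.
  rewrite [RHS](reindex_inj (@perm_inj _ s)) /=; apply: eq_bigr => i _.
  by rewrite [RHS](reindex_inj (@perm_inj _ s)).
have rhs : Lk c alpha f eta = A + \sum_(p < k) \sum_(q < k) G p q.
  rewrite /Lk sumPhi /A.
  under eq_bigr => p _.
    under eq_bigr do rewrite -mulrA mulrDl mulrDr.
    rewrite big_split.
    over.
  rewrite big_split; congr (_ + _).
    by apply: eq_bigr => p _; apply: eq_bigr => b _; rewrite /F; ring.
  apply: eq_bigr => p _.
  rewrite -(sumPhi x (fun b => c (x p) b * F (x p) b)).
  apply: eq_bigr => b _.
  rewrite /F /eta; ring.
rewrite /Sk lhs rhs -(mulr_natl (A + \sum_(p < k) \sum_(q < k) G p q)) mulrA mulVf ?mul1r //.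
by rewrite pnatr_eq0 -lt0n fact_gt0.
Qed.
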